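(* Let $p$ be a polynomial, $(c,\epsilon,\delta)$ a comonoid in $(\mathbf{Poly},\mathcal{y},\triangleleft)$, and $s$ a polynomial. Composing with $\pi\triangleleft s$, where $\pi\colon\mathfrak{c}_p\to p$ is the canonical projection, gives a bijection between $(\mathfrak{c}_p,c)$-effects handler structures $\Psi\colon s\triangleleft c\to\mathfrak{c}_p\triangleleft s$ on $s$ and elementary $(p,c)$-effects handler structures $\varphi\colon s\triangleleft c\to p\triangleleft s$ on $s$.
   Context: Polynomials $p=\sum_{I\in p(1)}\mathcal{y}^{p[I]}$ form $\mathbf{Poly}$ with composition $\triangleleft$ (unit $\mathcal{y}$, the polynomial with one position and one direction) and cartesian product $\times$. $\mathfrak{c}_p$ is the cofree comonoid on $p$: $\mathfrak{c}_p=\lim_i p^{(i)}$ where $p^{(0)}=\mathcal{y}$, $p^{(1+i)}=\mathcal{y}\times(p\triangleleft p^{(i)})$, with transition maps $\pi^{(0)}$ the projection and $\pi^{(1+i)}=\mathcal{y}\times(p\triangleleft\pi^{(i)})$; it carries a comonoid structure with counit the projection to $p^{(0)}$, and $\pi\colon\mathfrak{c}_p\to p$ is the projection $\mathfrak{c}_p\to p^{(1)}=\mathcal{y}\times p\to p$. For comonoids $c,d$, a $(c,d)$-effects handler is a polynomial $s$ with a morphism $\varphi\colon s\triangleleft d\to c\triangleleft s$ such that $(\epsilon_c\triangleleft s)\circ\varphi=s\triangleleft\epsilon_d$ and $(\delta_c\triangleleft s)\circ\varphi=(c\triangleleft\varphi)\circ(\varphi\triangleleft d)\circ(s\triangleleft\delta_d)$.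 For polynomials $p,q$, an elementary $(p,q)$-effects handler is a polynomial $s$ with any morphism $s\triangleleft q\to p\triangleleft s$. *)

(* Defs.v *)
(* Polynomial functors in Set, represented as
   (positions, directions) pairs, morphisms as dependent lenses. *)
From Stdlib Require Import Eqdep.

Set Implicit Arguments.

Record poly := Poly { pos : Type; dir : pos -> Type }.
Arguments Poly : clear implicits.

Record pmor (p q : poly) := PMor {
  onpos : pos p -> pos q;
  ondir : forall i : pos p, dir q (onpos i) -> dir p i }.
Arguments PMor {p q}.
Arguments onpos {p q}.
Arguments ondir {p q}.

Definition pid (p : poly) : pmor p p :=
  PMor (fun i => i) (fun i d => d).

Definition pcomp (p q r : poly) (g : pmor q r) (f : pmor p q) : pmor p r :=
  PMor (fun i => onpos g (onpos f i))
       (fun i d => ondir f i (ondir g (onpos f i) d)).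

Definition y : poly := Poly unit (fun _ => unit).

Definition comp (p q : poly) : poly :=
  Poly {i : pos p & dir p i -> pos q}
       (fun x => {d : dir p (projT1 x) & dir q (projT2 x d)}).

Definition hcomp (p p' q q' : poly) (f : pmor p p') (g : pmor q q')
  : pmor (comp p q) (comp p' q') :=
  @PMor (comp p q) (comp p' q') (fun x : pos (comp p q) => existT (fun i' => dir p' i' -> pos q')
                        (onpos f (projT1 x))
                        (fun d' => onpos g (projT2 x (ondir f (projT1 x) d'))))
       (fun (x : pos (comp p q)) de => existT (fun d => dir q (projT2 x d))
                           (ondir f (projT1 x) (projT1 de))
                           (ondir g _ (projT2 de))).

Definition prod (p q : poly) : poly :=
  Poly (pos p * pos q)%type (fun x => (dir p (fst x) + dir q (snd x))%type).

Definition hprod (p p' q q' : poly) (f : pmor p p') (g : pmor q q')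
  : pmor (prod p q) (prod p' q') :=
  @PMor (prod p q) (prod p' q') (fun x : pos (prod p q) => (onpos f (fst x), onpos g (snd x)))
       (fun (x : pos (prod p q)) e => match e with
                   | inl a => inl (ondir f (fst x) a)
                   | inr b => inr (ondir g (snd x) b)
                   end).

Definition lunit (p : poly) : pmor (comp y p) p :=
  @PMor (comp y p) p (fun x : pos (comp y p) => projT2 x tt)
       (fun x e => existT (fun d : unit => dir p (projT2 x d)) tt e).

Definition runit (p : poly) : pmor (comp p y) p :=
  @PMor (comp p y) p (fun x : pos (comp p y) => projT1 x)
       (fun x d => existT (fun d : dir p (projT1 x) => unit) d tt).

Definition assoc (p q r : poly) : pmor (comp (comp p q) r) (comp p (comp q r)) :=
  @PMor (comp (comp p q) r) (comp p (comp q r)) (fun x : pos (comp (comp p q) r) =>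
          existT (fun i => dir p i -> pos (comp q r)) (projT1 (projT1 x))
            (fun d => existT (fun j => dir q j -> pos r)
                        (projT2 (projT1 x) d)
                        (fun e => projT2 x (existT _ d e))))
       (fun x dex => existT (fun de : dir (comp p q) (projT1 x) => dir r (projT2 x de))
                       (existT _ (projT1 dex) (projT1 (projT2 dex)))
                       (projT2 (projT2 dex))).

Definition assoc_inv (p q r : poly) : pmor (comp p (comp q r)) (comp (comp p q) r) :=
  @PMor (comp p (comp q r)) (comp (comp p q) r) (fun x : pos (comp p (comp q r)) =>
          existT (fun ij : pos (comp p q) => dir (comp p q) ij -> pos r)
            (existT (fun i => dir p i -> pos q) (projT1 x)
                    (fun d => projT1 (projT2 x d)))
            (fun de => projT2 (projT2 x (projT1 de)) (projT2 de)))
       (fun x dex => existT (fun d => dir (comp q r) (projT2 x d))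
                       (projT1 (projT1 dex))
                       (existT (fun e => dir r (projT2 (projT2 x (projT1 (projT1 dex))) e))
                               (projT2 (projT1 dex)) (projT2 dex))).

Definition is_comonoid (c : poly) (eps : pmor c y) (delta : pmor c (comp c c)) : Prop :=
  pcomp (lunit c) (pcomp (hcomp eps (pid c)) delta) = pid c /\
  pcomp (runit c) (pcomp (hcomp (pid c) eps) delta) = pid c /\
  pcomp (assoc c c c) (pcomp (hcomp delta (pid c)) delta)
    = pcomp (hcomp (pid c) delta) delta.

(* (c,d)-effects handler structure phi : s ◁ d -> c ◁ s on s
   (the unitors/associator of (Poly, y, ◁) are inserted explicitly). *)
Definition is_handler (c : poly) (eps_c : pmor c y) (delta_c : pmor c (comp c c))
  (d : poly) (eps_d : pmor d y) (delta_d : pmor d (comp d d))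
  (s : poly) (phi : pmor (comp s d) (comp c s)) : Prop :=
  pcomp (lunit s) (pcomp (hcomp eps_c (pid s)) phi)
    = pcomp (runit s) (hcomp (pid s) eps_d) /\
  pcomp (assoc c c s) (pcomp (hcomp delta_c (pid s)) phi)
    = pcomp (hcomp (pid c) phi)
        (pcomp (assoc c s d)
          (pcomp (hcomp phi (pid d))
            (pcomp (assoc_inv s d d) (hcomp (pid s) delta_d)))).

(* The cofree comonoid c_p = lim_i p^(i)                            *)

Section Cofree.
Variable p : poly.

Fixpoint pw (n : nat) : poly :=
  match n with
  | 0 => y
  | S n => prod y (comp p (pw n))
  end.

Fixpoint ptrans (n : nat) : pmor (pw (S n)) (pw n) :=
  match n return pmor (pw (S n)) (pw n) with
  | 0 => @PMor (pw 1) (pw 0) (fun x : pos (pw 1) => fst x) (fun x e => inl e)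
  | S n => hprod (pid y) (hcomp (pid p) (ptrans n))
  end.

Definition limpos : Type :=
  {t : forall n, pos (pw n) | forall n, onpos (ptrans n) (t (S n)) = t n}.

Definition root (t : limpos) : pos p := projT1 (snd (proj1_sig t 1)).

Lemma root_level (t : limpos) (n : nat) :
  root t = projT1 (snd (proj1_sig t (S n))).
Proof.
  induction n as [|n IH]; [reflexivity|].
  rewrite IH. destruct t as [t Ht]. simpl.
  pose proof (f_equal (fun x : pos (pw (S n)) => projT1 (snd x)) (Ht (S n))) as H.
  simpl in H. exact (eq_sym H).
Qed.

Definition childseq (t : limpos) (d : dir p (root t)) (n : nat) : pos (pw n) :=
  projT2 (snd (proj1_sig t (S n))) (eq_rect _ (dir p) d _ (root_level t n)).

Lemma child_compat_aux (n : nat) (r : pos p) (d : dir p r)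
  (A : pos (pw (S (S n)))) (B : pos (pw (S n)))
  (H : onpos (ptrans (S n)) A = B)
  (e1 : r = projT1 (snd A)) (e2 : r = projT1 (snd B)) :
  onpos (ptrans n) (projT2 (snd A) (eq_rect _ (dir p) d _ e1))
  = projT2 (snd B) (eq_rect _ (dir p) d _ e2).
Proof.
  destruct A as [u [i f]], B as [u' [i' f']]. simpl in *.
  injection H as Hu Hi Hf. subst i'.
  apply inj_pair2 in Hf. subst f'. subst r.
  rewrite (UIP_refl _ _ e2). reflexivity.
Qed.

Lemma child_compat (t : limpos) (d : dir p (root t)) (n : nat) :
  onpos (ptrans n) (childseq t d (S n)) = childseq t d n.
Proof.
  unfold childseq. apply child_compat_aux. exact (proj2_sig t (S n)).
Qed.

Definition child (t : limpos) (d : dir p (root t)) : limpos :=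
  exist _ (childseq t d) (child_compat t d).

(* Directions of the limit (the colimit of the directions, which are the
   inclusions of shorter paths into longer ones): finite rooted paths. *)
Inductive path : limpos -> Type :=
| Here (t : limpos) : path t
| There (t : limpos) (d : dir p (root t)) : path (child t d) -> path t.
Arguments Here t : assert.
Arguments There {t} d _.

Fixpoint subtree (t : limpos) (a : path t) : limpos :=
  match a with
  | Here t => t
  | There _ q => subtree q
  end.

Fixpoint pconcat (t : limpos) (a : path t) : path (subtree a) -> path t :=
  match a in path t return path (subtree a) -> path t with
  | Here t => fun b => b
  | There d q => fun b => There d (pconcat q b)
  end.

Definition cofree : poly := Poly limpos path.

Definition cofree_eps : pmor cofree y :=
  @PMor cofree y (fun t : limpos => proj1_sig t 0) (fun t _ => Here t).

Definition cofree_delta : pmor cofree (comp cofree cofree) :=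
  @PMor cofree (comp cofree cofree) (fun t : limpos => existT (fun t : limpos => path t -> limpos) t
                                  (fun a => subtree a))
       (fun t ab => pconcat (projT1 ab) (projT2 ab)).

(* pi : c_p -> p^(1) = y × (p ◁ y) -> p ◁ y = p *)
Definition cofree_proj : pmor cofree p :=
  @PMor cofree p root (fun t d => There d (Here (child t d))).

End Cofree.

(* Main.v *)
From Stdlib Require Import Eqdep FunctionalExtensionality ProofIrrelevance.
Require Import Defs.

Lemma eq_rect_refl_conv {A : Type} (P : A -> Type) (a : A) (ee : a = a) (d : P a) :
  eq_rect a P d a ee = d.
Proof. rewrite (UIP_refl _ _ ee). reflexivity. Qed.

Lemma pmor_ext2 {P Q : poly} (f g : pmor P Q) :
  (forall i, existT (fun j => dir Q j -> dir P i) (onpos f i) (ondir f i)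
           = existT _ (onpos g i) (ondir g i)) -> f = g.
Proof.
  destruct f as [of df], g as [og dg]; simpl; intro H.
  assert (E : of = og) by (apply functional_extensionality; intro i;
                           exact (f_equal (@projT1 _ _) (H i))).
  subst og. f_equal. apply functional_extensionality_dep; intro i.
  exact (inj_pair2 _ _ _ _ _ (H i)).
Qed.

Lemma pmor_pt {P Q : poly} (f g : pmor P Q) : f = g ->
  forall i, existT (fun j => dir Q j -> dir P i) (onpos f i) (ondir f i)
           = existT _ (onpos g i) (ondir g i).
Proof. intros ->; reflexivity. Qed.

Lemma pack2 {P Q : poly} {Y : Type} (t : pos P) (F1 F2 : dir P t -> pos Q)
  (D1 : dir (comp P Q) (existT _ t F1) -> Y) (D2 : dir (comp P Q) (existT _ t F2) -> Y) :
  (forall a, existT (fun j => dir Q j -> Y) (F1 a) (fun z => D1 (existT _ a z))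
           = existT _ (F2 a) (fun z => D2 (existT _ a z))) ->
  existT (fun j : pos (comp P Q) => dir (comp P Q) j -> Y) (existT _ t F1) D1
  = existT _ (existT _ t F2) D2.
Proof.
  intro H.
  assert (E : F1 = F2) by (apply functional_extensionality; intro a;
                           exact (f_equal (@projT1 _ _) (H a))).
  subst F2. f_equal. apply functional_extensionality; intros [a z].
  exact (f_equal (fun k => k z) (inj_pair2 _ _ _ _ _ (H a))).
Qed.

Lemma unpack2 {P Q : poly} {Y : Type} (P1 P2 : pos (comp P Q))
  (D1 : dir (comp P Q) P1 -> Y) (D2 : dir (comp P Q) P2 -> Y) :
  existT (fun j => dir (comp P Q) j -> Y) P1 D1 = existT _ P2 D2 ->
  forall (E : projT1 P1 = projT1 P2) a,
  existT (fun j => dir Q j -> Y) (projT2 P1 a) (fun z => D1 (existT _ a z))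
  = existT _ (projT2 P2 (eq_rect _ (dir P) a _ E))
             (fun z => D2 (existT _ (eq_rect _ (dir P) a _ E) z)).
Proof.
  intro H. assert (E0 : P1 = P2) by exact (f_equal (@projT1 _ _) H).
  subst P2. apply inj_pair2 in H. subst D2. intros E a.
  rewrite (UIP_refl _ _ E). reflexivity.
Qed.

Lemma repack {P Q : poly} {Y : Type} (P1 P2 : pos (comp P Q))
  (D1 : dir (comp P Q) P1 -> Y) (D2 : dir (comp P Q) P2 -> Y) :
  existT (fun t => dir P t -> {j : pos Q & dir Q j -> Y}) (projT1 P1)
    (fun a => existT _ (projT2 P1 a) (fun z => D1 (existT _ a z)))
  = existT _ (projT1 P2) (fun a => existT _ (projT2 P2 a) (fun z => D2 (existT _ a z))) ->
  existT (fun j => dir (comp P Q) j -> Y) P1 D1 = existT _ P2 D2.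
Proof.
  destruct P1 as [t1 g1], P2 as [t2 g2]; simpl; intro H.
  assert (E : t1 = t2) by exact (f_equal (@projT1 _ _) H). subst t2.
  apply inj_pair2 in H. apply pack2. intro a.
  exact (f_equal (fun k => k a) H).
Qed.

Lemma sig_funext {A B : Type} {C : A -> B -> Type} (g1 g2 : A -> B)
  (k1 : forall a, C a (g1 a)) (k2 : forall a, C a (g2 a)) :
  (forall a, existT (C a) (g1 a) (k1 a) = existT (C a) (g2 a) (k2 a)) ->
  existT (fun g : A -> B => forall a, C a (g a)) g1 k1 = existT _ g2 k2.
Proof.
  intro H.
  assert (E : g1 = g2) by (apply functional_extensionality; intro a;
                           exact (f_equal (@projT1 _ _) (H a))).
  subst g2. f_equal. apply functional_extensionality_dep; intro a.
  exact (inj_pair2 _ _ _ _ _ (H a)).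
Qed.

Lemma sig_fun_normal {A : Type} {B : A -> Type} (o : A -> {a : A & B a})
  (H : forall x, projT1 (o x) = x) :
  exists o' : forall a, B a, o = fun x => existT B x (o' x).
Proof.
  exists (fun x => eq_rect _ B (projT2 (o x)) x (H x)).
  apply functional_extensionality; intro x. generalize (H x).
  destruct (o x) as [x0 g]; simpl. intro e; subst. reflexivity.
Qed.

Lemma sig_eq_transport {A : Type} {P : A -> Type} {Z : Type} (t1 t2 : A) (E : t1 = t2)
  (F1 : P t1 -> Z) (F2 : P t2 -> Z) :
  (forall a, F1 a = F2 (eq_rect _ P a _ E)) ->
  existT (fun t => P t -> Z) t1 F1 = existT _ t2 F2.
Proof.
  subst t2; simpl; intro H. f_equal. apply functional_extensionality; exact H.
Qed.

Lemma limpos_eq (p : poly) (t1 t2 : limpos p) :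
  (forall n, proj1_sig t1 n = proj1_sig t2 n) -> t1 = t2.
Proof.
  destruct t1 as [f1 H1], t2 as [f2 H2]; simpl; intro H.
  assert (E : f1 = f2) by (apply functional_extensionality_dep; exact H).
  subst f2. f_equal. apply proof_irrelevance.
Qed.

Lemma level_gen (p : poly) (n : nat) (A : pos (pw p (S n))) (r0 : pos p)
  (e : r0 = projT1 (snd A)) :
  A = (tt, existT (fun i => dir p i -> pos (pw p n)) r0
             (fun d => projT2 (snd A) (eq_rect _ (dir p) d _ e))).
Proof.
  destruct A as [u [r1 k]]; simpl in *. destruct u. subst r1. reflexivity.
Qed.

Lemma level_S (p : poly) (t : limpos p) (n : nat) :
  proj1_sig t (S n) = (tt, existT (fun i => dir p i -> pos (pw p n)) (root t)
                              (fun d => proj1_sig (child t d) n)).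
Proof.
  exact (@level_gen p n (proj1_sig t (S n)) _ (root_level t n)).
Qed.

Section Build.
Variables (p c s : poly) (eps : pmor c y)
  (d1 : forall x : pos c, dir c x -> pos c)
  (dd : forall x : pos c, {e : dir c x & dir c (d1 x e)} -> dir c x)
  (phi : pmor (comp s c) (comp p s)).

Definition rr (x : pos (comp s c)) : pos p := projT1 (onpos phi x).
Definition hh (x : pos (comp s c)) : dir p (rr x) -> pos s := projT2 (onpos phi x).
Definition phd (x : pos (comp s c)) (d : dir p (rr x)) (b : dir s (hh x d)) : dir (comp s c) x :=
  ondir phi x (existT (fun d0 => dir s (projT2 (onpos phi x) d0)) d b).
Definition next (x : pos (comp s c)) (d : dir p (rr x)) (b : dir s (hh x d)) : pos c :=
  d1 (projT2 x (projT1 (phd x d b))) (projT2 (phd x d b)).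
Definition ch (x : pos (comp s c)) (d : dir p (rr x)) : pos (comp s c) :=
  existT (fun i => dir s i -> pos c) (hh x d) (next x d).

Fixpoint T (n : nat) (x : pos (comp s c)) {struct n} : pos (pw p n) :=
  match n return pos (pw p n) with
  | 0 => tt
  | S n' => (tt, existT (fun i => dir p i -> pos (pw p n')) (rr x) (fun d => T n' (ch x d)))
  end.

Lemma Tcompat n x : onpos (ptrans p n) (T (S n) x) = T n x.
Proof.
  revert x; induction n as [|n IH]; intro x; [reflexivity|].
  simpl. f_equal. f_equal. apply functional_extensionality; intro d. apply IH.
Qed.

Definition Tr (x : pos (comp s c)) : limpos p :=
  exist (fun t : forall n, pos (pw p n) => forall n, onpos (ptrans p n) (t (S n)) = t n) (fun n => T n x) (fun n => Tcompat n x).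

Lemma child_Tr x d : child (Tr x) d = Tr (ch x d).
Proof.
  apply limpos_eq; intro n. unfold child, childseq; simpl.
  rewrite eq_rect_refl_conv. reflexivity.
Qed.

Lemma child_eq (t : limpos p) x (e : t = Tr x) (d : dir p (root t)) :
  child t d = Tr (ch x (eq_rect _ (dir p) d _ (f_equal (@root p) e))).
Proof. subst t. simpl. apply child_Tr. Qed.

Fixpoint st (t : limpos p) (a : path t) {struct a} :
  forall x : pos (comp s c), t = Tr x -> pos (comp s c) :=
  match a in path t0 return forall x, t0 = Tr x -> pos (comp s c) with
  | @Here _ t0 => fun x _ => x
  | @There _ t0 d q => fun x e =>
      st _ q (ch x (eq_rect _ (dir p) d _ (f_equal (@root p) e))) (child_eq _ _ e d)
  end.

Fixpoint Dd (t : limpos p) (a : path t) {struct a} :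
  forall x (e : t = Tr x), dir s (projT1 (st t a x e)) -> dir (comp s c) x :=
  match a as a0 in path t0
    return forall x (e : t0 = Tr x), dir s (projT1 (st t0 a0 x e)) -> dir (comp s c) x with
  | @Here _ t0 => fun x e b =>
      existT (fun a => dir c (projT2 x a)) b (ondir eps (projT2 x b) tt)
  | @There _ t0 d q => fun x e b =>
      let rq := Dd _ q (ch x (eq_rect _ (dir p) d _ (f_equal (@root p) e))) (child_eq _ _ e d) b in
      let u := phd x (eq_rect _ (dir p) d _ (f_equal (@root p) e)) (projT1 rq) in
      existT (fun a => dir c (projT2 x a)) (projT1 u)
        (dd (projT2 x (projT1 u))
            (existT (fun e0 => dir c (d1 _ e0)) (projT2 u) (projT2 rq)))
  end.

Definition Bld : pmor (comp s c) (comp (cofree p) s) :=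
  @PMor (comp s c) (comp (cofree p) s)
    (fun x => existT (fun t : limpos p => path t -> pos s) (Tr x)
                     (fun a => projT1 (st (Tr x) a x eq_refl)))
    (fun x ab => Dd (Tr x) (projT1 ab) x eq_refl (projT2 ab)).

Definition dlt : pmor c (comp c c) :=
  @PMor c (comp c c) (fun x => existT (fun i => dir c i -> pos c) x (d1 x)) dd.

Lemma Bld_counit :
  pcomp (lunit s) (pcomp (hcomp (cofree_eps p) (pid s)) Bld)
    = pcomp (runit s) (hcomp (pid s) eps).
Proof. reflexivity. Qed.

Hypothesis Hrun : forall y0 e, dd y0 (existT _ e (ondir eps (d1 y0 e) tt)) = e.

Lemma Bld_F : pcomp (hcomp (cofree_proj p) (pid s)) Bld = phi.
Proof.
  apply pmor_ext2; intro x.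
  transitivity (existT (fun j => dir (comp p s) j -> dir (comp s c) x)
    (existT (fun i => dir p i -> pos s) (projT1 (onpos phi x)) (fun d => projT2 (onpos phi x) d))
    (fun z => ondir phi x (existT _ (projT1 z) (projT2 z)))).
  - f_equal. apply functional_extensionality; intro z. cbn.
    cbv [phd next].
    destruct (ondir phi x _) as [a e]. simpl. rewrite Hrun. reflexivity.
  - generalize (ondir phi x). destruct (onpos phi x) as [r0 h0]. intro g.
    f_equal. apply functional_extensionality; intros [d b]. reflexivity.
Qed.

Hypothesis HSL : forall y0 : pos c,
  existT (fun z => dir c z -> dir c y0) (d1 y0 (ondir eps y0 tt))
         (fun e' => dd y0 (existT _ (ondir eps y0 tt) e'))
  = existT _ y0 (fun e0 => e0).
Hypothesis HAs : forall (y0 : pos c) (e : dir c y0) (e2 : dir c (d1 y0 e)),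
  existT (fun z => dir c z -> dir c y0) (d1 (d1 y0 e) e2)
     (fun w => dd y0 (existT _ e (dd (d1 y0 e) (existT _ e2 w))))
  = existT _ (d1 y0 (dd y0 (existT _ e e2)))
     (fun w => dd y0 (existT _ (dd y0 (existT _ e e2)) w)).

Definition Yst (t : limpos p) (a : path t) x (e : t = Tr x) : pos (comp s c) :=
  existT (fun i => dir s i -> pos c) (projT1 (st t a x e))
    (fun b => d1 (projT2 x (projT1 (Dd t a x e b))) (projT2 (Dd t a x e b))).

Definition Comb (t : limpos p) (a : path t) x (e : t = Tr x)
  (u : dir (comp s c) (Yst t a x e)) : dir (comp s c) x :=
  existT (fun a0 => dir c (projT2 x a0)) (projT1 (Dd t a x e (projT1 u)))
    (dd (projT2 x (projT1 (Dd t a x e (projT1 u))))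
        (existT (fun e0 => dir c (d1 _ e0)) (projT2 (Dd t a x e (projT1 u))) (projT2 u))).

Lemma CMB (t : limpos p) (a : path t) : forall x (e : t = Tr x),
  existT (fun j : pos (comp (cofree p) s) => dir (comp (cofree p) s) j -> dir (comp s c) x)
    (existT (fun t' : limpos p => path t' -> pos s) (subtree a)
       (fun b => projT1 (st t (pconcat a b) x e)))
    (fun bz => Dd t (pconcat a (projT1 bz)) x e (projT2 bz))
  = existT _ (onpos Bld (Yst t a x e)) (fun z => Comb t a x e (ondir Bld (Yst t a x e) z)).
Proof.
  induction a as [t0|t0 d q IH]; intros x e.
  - subst t0. destruct x as [i f].
    pose (Phi := fun P : {g : dir s i -> pos c & forall b, dir c (g b) -> dir c (f b)} =>
      existT (fun j : pos (comp (cofree p) s) => dir (comp (cofree p) s) j -> dir (comp s c) (existT _ i f))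
        (onpos Bld (existT _ i (projT1 P)))
        (fun z => existT (fun a0 => dir c (f a0)) (projT1 (ondir Bld _ z))
                         (projT2 P _ (projT2 (ondir Bld _ z))))).
    assert (HP : existT (fun g : dir s i -> pos c => forall b, dir c (g b) -> dir c (f b))
                   (fun b => d1 (f b) (ondir eps (f b) tt))
                   (fun b e' => dd (f b) (existT _ (ondir eps (f b) tt) e'))
                 = existT _ f (fun b e0 => e0)).
    { apply (sig_funext (C := fun b z => dir c z -> dir c (f b))). intro b. apply HSL. }
    transitivity (Phi (existT _ f (fun b e0 => e0))).
    + unfold Phi. simpl. f_equal. apply functional_extensionality; intro z.
      destruct (Dd _ _ _ _ _). reflexivity.
    + rewrite <- HP. reflexivity.
  - pose (d' := eq_rect _ (dir p) d _ (f_equal (@root p) e)).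
    pose (E := child_eq t0 x e d).
    pose (x' := ch x d').
    pose (Mp := fun P : {j : pos (comp (cofree p) s) & dir (comp (cofree p) s) j -> dir (comp s c) x'} =>
      existT (fun j : pos (comp (cofree p) s) => dir (comp (cofree p) s) j -> dir (comp s c) x)
        (projT1 P)
        (fun z => existT (fun a0 => dir c (projT2 x a0))
            (projT1 (phd x d' (projT1 (projT2 P z))))
            (dd (projT2 x (projT1 (phd x d' (projT1 (projT2 P z)))))
               (existT (fun e0 => dir c (d1 _ e0)) (projT2 (phd x d' (projT1 (projT2 P z))))
                  (projT2 (projT2 P z)))))).
    refine (eq_trans (f_equal Mp (IH x' E)) _).
    pose (s0 := projT1 (st _ q x' E)).
    pose (Dq := fun b : dir s s0 => Dd _ q x' E b).
    pose (u := fun b : dir s s0 => phd x d' (projT1 (Dq b))).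
    pose (Phi := fun P : {g : dir s s0 -> pos c & forall b, dir c (g b) -> dir (comp s c) x} =>
      existT (fun j : pos (comp (cofree p) s) => dir (comp (cofree p) s) j -> dir (comp s c) x)
        (onpos Bld (existT (fun i => dir s i -> pos c) s0 (projT1 P)))
        (fun z => projT2 P (projT1 (ondir Bld _ z)) (projT2 (ondir Bld _ z)))).
    assert (HP : existT (fun g : dir s s0 -> pos c => forall b, dir c (g b) -> dir (comp s c) x)
       (fun b => d1 (next x d' (projT1 (Dq b))) (projT2 (Dq b)))
       (fun b w => existT (fun a0 => dir c (projT2 x a0)) (projT1 (u b))
          (dd (projT2 x (projT1 (u b)))
             (existT (fun e0 => dir c (d1 _ e0)) (projT2 (u b))
                (dd (next x d' (projT1 (Dq b)))
                    (existT (fun e0 => dir c (d1 _ e0)) (projT2 (Dq b)) w)))))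
     = existT _
       (fun b => d1 (projT2 x (projT1 (u b)))
                    (dd (projT2 x (projT1 (u b)))
                        (existT (fun e0 => dir c (d1 _ e0)) (projT2 (u b)) (projT2 (Dq b)))))
       (fun b w => existT (fun a0 => dir c (projT2 x a0)) (projT1 (u b))
          (dd (projT2 x (projT1 (u b)))
             (existT (fun e0 => dir c (d1 _ e0))
                (dd (projT2 x (projT1 (u b)))
                    (existT (fun e0 => dir c (d1 _ e0)) (projT2 (u b)) (projT2 (Dq b))))
                w)))).
    { apply (sig_funext (C := fun b z => dir c z -> dir (comp s c) x)). intro b.
      exact (f_equal (fun P : {z : pos c & dir c z -> dir c (projT2 x (projT1 (u b)))} =>
                existT (fun z => dir c z -> dir (comp s c) x) (projT1 P)
                  (fun w => existT (fun a0 => dir c (projT2 x a0)) (projT1 (u b)) (projT2 P w)))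
               (HAs (projT2 x (projT1 (u b))) (projT2 (u b)) (projT2 (Dq b)))). }
    exact (f_equal Phi HP).
Qed.


Lemma Bld_comult :
  pcomp (assoc (cofree p) (cofree p) s) (pcomp (hcomp (cofree_delta p) (pid s)) Bld)
  = pcomp (hcomp (pid (cofree p)) Bld)
      (pcomp (assoc (cofree p) s c)
        (pcomp (hcomp Bld (pid c))
          (pcomp (assoc_inv s c c) (hcomp (pid s) dlt)))).
Proof.
  apply pmor_ext2; intros [i f].
  refine (pack2 (P := cofree p) (Q := comp (cofree p) s) (Tr (existT _ i f)) _ _ _ _ _).
  intro a. exact (CMB _ a _ eq_refl).
Qed.

Lemma Bld_handler : is_handler (cofree_eps p) (cofree_delta p) eps dlt Bld.
Proof. split; [exact Bld_counit | exact Bld_comult]. Qed.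

End Build.

Section Uniq.
Variables (p c s : poly) (eps : pmor c y)
  (d1 : forall x : pos c, dir c x -> pos c)
  (dd : forall x : pos c, {e : dir c x & dir c (d1 x e)} -> dir c x)
  (Psi : pmor (comp s c) (comp (cofree p) s)).
Hypothesis HPsi : is_handler (cofree_eps p) (cofree_delta p) eps (dlt c d1 dd) Psi.

Let phi := pcomp (hcomp (cofree_proj p) (pid s)) Psi.
Let TP x := projT1 (onpos Psi x).

Lemma child_T x d : child (TP x) d = TP (ch p c s d1 phi x d).
Proof.
  destruct x as [i f].
  pose proof (unpack2 _ _ _ _ (pmor_pt _ _ (proj2 HPsi) (existT _ i f))
     (@eq_refl _ (TP (existT _ i f))) (@There p _ d (Here (child _ d)))) as H.
  exact (f_equal (fun P => projT1 (projT1 P)) H).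
Qed.

Lemma T_eq x : TP x = Tr p c s d1 phi x.
Proof.
  apply limpos_eq; intro n. revert x; induction n as [|n IH]; intro x.
  - change (proj1_sig (Tr p c s d1 phi x) 0) with tt. destruct (proj1_sig (TP x) 0). reflexivity.
  - rewrite level_S. simpl. f_equal. f_equal.
    apply functional_extensionality; intro d. change (childseq (TP x) d n) with (proj1_sig (child (TP x) d) n). rewrite child_T. apply IH.
Qed.

Definition PkP x (a : path (TP x)) :=
  existT (fun j => dir s j -> dir (comp s c) x) (projT2 (onpos Psi x) a)
    (fun b => ondir Psi x (existT _ a b)).

Definition PkB (t : limpos p) (a : path t) x (e : t = Tr p c s d1 phi x) :=
  existT (fun j => dir s j -> dir (comp s c) x) (projT1 (st p c s d1 phi t a x e))
    (fun b => Dd p c s eps d1 dd phi t a x e b).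

Lemma ML (t : limpos p) (a : path t) : forall x (e1 : TP x = t) (e2 : t = Tr p c s d1 phi x),
  PkP x (eq_rect _ (@path p) a _ (eq_sym e1)) = PkB t a x e2.
Proof.
  induction a as [t0|t0 d q IH]; intros x e1 e2.
  - subst t0. exact (pmor_pt _ _ (proj1 HPsi) x).
  - destruct x as [i f]. subst t0.
    pose (x := existT (fun i => dir s i -> pos c) i f).
    pose (E := child_T x d).
    pose proof (unpack2 _ _ _ _ (pmor_pt _ _ (proj2 HPsi) x)
     (@eq_refl _ (TP x)) (@There p _ d (Here (child _ d)))) as H0.
    pose proof (unpack2 _ _ _ _ H0 E q) as H1.
    pose (Mp := fun (d'' : dir p (rr p c s phi x))
                    (P : {j : pos s & dir s j -> dir (comp s c) (ch p c s d1 phi x d'')}) =>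
      existT (fun j => dir s j -> dir (comp s c) x) (projT1 P)
        (fun z => existT (fun a0 => dir c (projT2 x a0))
            (projT1 (phd p c s phi x d'' (projT1 (projT2 P z))))
            (dd (projT2 x (projT1 (phd p c s phi x d'' (projT1 (projT2 P z)))))
               (existT (fun e0 => dir c (d1 _ e0)) (projT2 (phd p c s phi x d'' (projT1 (projT2 P z))))
                  (projT2 (projT2 P z)))))).
    pose (d' := eq_rect _ (dir p) d _ (f_equal (@root p) e2)).
    assert (HD : d' = d) by exact (eq_rect_refl_conv (dir p) (root (TP x)) (f_equal (@root p) e2) d).
    assert (K : forall (d'' : dir p (rr p c s phi x)) (HD : d'' = d)
                  (e3 : child (TP x) d = TP (ch p c s d1 phi x d'')),
               Mp d'' (PkP (ch p c s d1 phi x d'') (eq_rect _ (@path p) q _ e3))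
               = Mp d (PkP (ch p c s d1 phi x d) (eq_rect _ (@path p) q _ E))).
    { intros d'' HD' e3. subst d''. rewrite (proof_irrelevance _ e3 E). reflexivity. }
    pose (e1' := eq_trans (f_equal (fun z => TP (ch p c s d1 phi x z)) HD) (eq_sym E)).
    refine (eq_trans H1 _).
    refine (eq_trans (eq_sym (K d' HD (eq_sym e1'))) _).
    exact (f_equal (Mp d') (IH (ch p c s d1 phi x d') e1' (child_eq p c s d1 phi _ x e2 d))).
Qed.

Lemma PkB_transport (t : limpos p) (a : path t) x (e : t = Tr p c s d1 phi x) :
  PkB t a x e = PkB _ (eq_rect _ (@path p) a _ e) x eq_refl.
Proof. subst t. reflexivity. Qed.

Lemma uniq : Psi = Bld p c s eps d1 dd phi.
Proof.
  apply pmor_ext2; intro x. apply repack.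
  apply (sig_eq_transport _ _ (T_eq x)). intro a.
  refine (eq_trans (ML _ a x eq_refl (T_eq x)) _).
  apply PkB_transport.
Qed.
End Uniq.

Theorem mainTheorem12 (p c : poly) (eps : pmor c y) (delta : pmor c (comp c c))
  (Hc : is_comonoid eps delta) (s : poly) :
  let F := fun Psi : pmor (comp s c) (comp (cofree p) s) =>
             pcomp (hcomp (cofree_proj p) (pid s)) Psi in
  (forall Psi1 Psi2 : pmor (comp s c) (comp (cofree p) s),
      is_handler (cofree_eps p) (cofree_delta p) eps delta Psi1 ->
      is_handler (cofree_eps p) (cofree_delta p) eps delta Psi2 ->
      F Psi1 = F Psi2 -> Psi1 = Psi2) /\
  (forall phi : pmor (comp s c) (comp p s),
      exists Psi : pmor (comp s c) (comp (cofree p) s),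
        is_handler (cofree_eps p) (cofree_delta p) eps delta Psi /\ F Psi = phi).
Proof.
  intros F. destruct delta as [dpos dd0].
  assert (Hr : forall x, projT1 (dpos x) = x).
  { intro x. destruct Hc as [_ [H2 _]].
    exact (f_equal (fun g => onpos g x) H2). }
  destruct (sig_fun_normal dpos Hr) as [d1 Hd]. subst dpos.
  assert (Hrun : forall y0 e, dd0 y0 (existT _ e (ondir eps (d1 y0 e) tt)) = e).
  { intros y0 e. pose proof (pmor_pt _ _ (proj1 (proj2 Hc)) y0) as H.
    apply inj_pair2 in H. exact (f_equal (fun k => k e) H). }
  assert (HSL := fun y0 => pmor_pt _ _ (proj1 Hc) y0).
  assert (HAs : forall (y0 : pos c) (e : dir c y0) (e2 : dir c (d1 y0 e)),
    existT (fun z => dir c z -> dir c y0) (d1 (d1 y0 e) e2)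
       (fun w => dd0 y0 (existT _ e (dd0 (d1 y0 e) (existT _ e2 w))))
    = existT _ (d1 y0 (dd0 y0 (existT _ e e2)))
       (fun w => dd0 y0 (existT _ (dd0 y0 (existT _ e e2)) w))).
  { intros y0 e e2. pose proof (pmor_pt _ _ (proj2 (proj2 Hc)) y0) as H.
    pose proof (unpack2 _ _ _ _ H (@eq_refl _ y0) e) as H1.
    pose proof (unpack2 _ _ _ _ H1 (@eq_refl _ (d1 y0 e)) e2) as H2.
    exact (eq_sym H2). }
  split.
  - intros Psi1 Psi2 H1 H2 HF. unfold F in HF.
    rewrite (uniq p c s eps d1 dd0 Psi1 H1), (uniq p c s eps d1 dd0 Psi2 H2), HF.
    reflexivity.
  - intro phi. exists (Bld p c s eps d1 dd0 phi). split.
    + exact (Bld_handler p c s eps d1 dd0 phi HSL HAs).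
    + exact (Bld_F p c s eps d1 dd0 phi Hrun).
Qed.
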